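(* Let $a_1,\dots,a_\ell,c_1,\dots,c_s,m,b_1,\dots,b_t$ be integers $\ge 2$ with $a_\ell>2$ when $\ell\ge1$, where $\ell,s,t\ge 0$. For each integer $k\ge 0$ let $p=p(k)>q=q(k)>0$ be the coprime integers with $$\frac{p}{q}=\left[a_1,\dots,a_\ell,[2]^k,c_1,\dots,c_s,m+k,b_1,\dots,b_t\right],$$ and let $q^{-1}=q^{-1}(k)$ be the inverse of $q$ modulo $p$ with $0<q^{-1}<p$. Then there are constants $d_i,e_i,f_i$ ($i=1,2,3$), independent of $k$, with $d_1\neq 0$, such that for all $k\ge 0$: $p=d_1k^2+e_1k+f_1$, $q=d_2k^2+e_2k+f_2$, $q^{-1}=d_3k^2+e_3k+f_3$, and $$\frac{d_1}{d_2}=\begin{cases}[a_1,\dots,a_{\ell-1},a_\ell-1] & \ell\ge1,\\ 1 & \ell=0,\end{cases}\qquad \frac{d_1}{d_3}=\begin{cases}[b_t,\dots,b_1] & t\ge1,\\ \infty\ (\text{i.e. } d_3=0) & t=0.\end{cases}$$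
   Context: $[x_1,\dots,x_n]=x_1-1/(x_2-1/(\cdots-1/x_n))$ denotes the Hirzebruch–Jung continued fraction; $[2]^k$ denotes $k$ consecutive entries equal to $2$. *)

(* Defs.v *)
From mathcomp Require Import all_boot all_order all_algebra.
Set Implicit Arguments. Unset Strict Implicit. Unset Printing Implicit Defensive.
Import Order.TTheory GRing.Theory Num.Theory.
Local Open Scope ring_scope.

(* Hirzebruch--Jung continued fraction [x_1,...,x_n] = x_1 - 1/(x_2 - 1/(... - 1/x_n)).
   (The empty fraction is never used; it is set to 0.) *)
Fixpoint hj (s : seq rat) : rat :=
  match s with
  | [::] => 0
  | x :: s' => if s' is [::] then x else x - (hj s')^-1
  end.

Definition natQ (n : nat) : rat := n%:R.

Definition hjseq (a c b : seq nat) (m k : nat) : seq nat :=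
  a ++ nseq k 2%N ++ c ++ (m + k)%N :: b.

Definition pval (a c b : seq nat) (m k : nat) : int :=
  numq (hj (map natQ (hjseq a c b m k))).
Definition qval (a c b : seq nat) (m k : nat) : int :=
  denq (hj (map natQ (hjseq a c b m k))).

Definition inv_mod (p q : nat) : nat :=
  if [pick r : 'I_p | (0 < r)%N && ((q * r) %% p == 1 %% p)%N] is Some r
  then nat_of_ord r else 0%N.

Definition qinvval (a c b : seq nat) (m k : nat) : nat :=
  inv_mod `|pval a c b m k|%N `|qval a c b m k|%N.

(* Main.v *)
Require Import Defs.
From mathcomp Require Import all_boot all_order all_algebra.
From mathcomp Require Import ring lra zify.
Import Order.TTheory GRing.Theory Num.Theory.
Local Open Scope ring_scope.

Record mat := Mat { m11 : int; m12 : int; m21 : int; m22 : int }.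
Definition mmul (A B : mat) : mat :=
  Mat (m11 A * m11 B + m12 A * m21 B) (m11 A * m12 B + m12 A * m22 B)
      (m21 A * m11 B + m22 A * m21 B) (m21 A * m12 B + m22 A * m22 B).
Definition mI := Mat 1 0 0 1.
Definition Mx (x : nat) := Mat x%:Z (-1) 1 0.
Definition prodm (s : seq nat) := foldr (fun x P => mmul (Mx x) P) mI s.

Lemma mmulA A B C : mmul A (mmul B C) = mmul (mmul A B) C.
Proof. by case: A => ????; case: B => ????; case: C => ????; rewrite /mmul /=; congr Mat; ring. Qed.
Lemma mul1m A : mmul mI A = A.
Proof. by case: A => ????; rewrite /mmul /=; congr Mat; ring. Qed.
Lemma mulm1 A : mmul A mI = A.
Proof. by case: A => ????; rewrite /mmul /=; congr Mat; ring. Qed.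

Lemma prodm_cat s1 s2 : prodm (s1 ++ s2) = mmul (prodm s1) (prodm s2).
Proof. elim: s1 => [|x s IH] /=; first by rewrite mul1m. by rewrite IH mmulA. Qed.

Lemma prodm_rcons s x : prodm (rcons s x) = mmul (prodm s) (Mx x).
Proof. by rewrite -cats1 prodm_cat /= mulm1. Qed.

Lemma prodm_nseq k : prodm (nseq k 2%N) = Mat (k%:Z + 1) (- k%:Z) k%:Z (1 - k%:Z).
Proof.
elim: k => [|k IH] /=; first by congr Mat.
rewrite IH /mmul /=; congr Mat; lia.
Qed.

Lemma prodm_inv s : all (fun x => 2 <= x)%N s -> s != [::] ->
  let P := prodm s in
  (m21 P < m11 P) /\ (0 < m21 P) /\ (- m22 P < - m12 P) /\ (0 <= - m22 P) /\
      (m21 P + m22 P <= m11 P + m12 P) /\ (0 < m21 P + m22 P) /\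
      ((- m12 P) * m21 P - m11 P * (- m22 P) = 1).
Proof.
elim: s => [|x s IH] //= /andP [hx hs] _.
case: s IH hs => [|y s] IH hs.
  rewrite /mmul /=; split; [|split; [|split; [|split; [|split; [|split]]]]]; lia.
have := IH hs isT.
rewrite [prodm (y :: s)]/=.
move: (mmul _ _) => P.
case: P => p11 p12 p21 p22 /= [h1 [h2 [h3 [h4 [h5 [h6 h7]]]]]].
rewrite /mmul /=.
have hx' : (2 <= x%:Z) by lia.
split; [|split; [|split; [|split; [|split; [|split]]]]]; nia.
Qed.

Lemma hj_prodm s : all (fun x => 2 <= x)%N s -> s != [::] ->
  hj (map natQ s) = (m11 (prodm s))%:~R / (m21 (prodm s))%:~R.
Proof.
elim: s => [|x s IH] //= /andP [hx hs] _.
case: s IH hs => [|y s] IH hs.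
  rewrite /mmul /= /natQ mulr1 mulr0 mulr1 mulr0 !addr0 divr1 //.
have [h1 [h2 _]] := @prodm_inv (y :: s) hs isT.
change (natQ x - (hj (map natQ (y::s)))^-1 = (m11 (prodm (x :: y :: s)))%:~R / (m21 (prodm (x :: y :: s)))%:~R).
rewrite IH //.
have -> : prodm (x :: y :: s) = mmul (Mx x) (prodm (y :: s)) by [].
move: (prodm (y::s)) h1 h2 => P h1 h2.
rewrite /mmul /= /natQ [x%:R]pmulrn.
have hp : (m11 P)%:~R != 0 :> rat by rewrite intr_eq0; lia.
rewrite invf_div !rmorphD !rmorphM /= mul1r mul0r addr0 mulN1r.
idtac.
by field.
Qed.

Lemma numq_prodm s : all (fun x => 2 <= x)%N s -> s != [::] ->
  numq (hj (map natQ s)) = m11 (prodm s) /\ denq (hj (map natQ s)) = m21 (prodm s).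
Proof.
move=> hs hn; rewrite hj_prodm //.
have [h1 [h2 [h3 [h4 [h5 [h6 h7]]]]]] := @prodm_inv s hs hn.
have cop : coprime `|m11 (prodm s)| `|m21 (prodm s)|.
  have : coprimez (m11 (prodm s)) (m21 (prodm s)).
    apply/coprimezP; exists (m22 (prodm s), - m12 (prodm s)) => /=; lia.
  by rewrite /coprimez /gcdz.
rewrite coprimeq_num // coprimeq_den //.
split; first by rewrite gtr0_sg // mul1r.
have -> : (m21 (prodm s) == 0) = false by lia.
lia.
Qed.

Lemma inv_mod_eq (p q p' w : nat) : (0 < p')%N -> (p' < p)%N -> (q * p' = 1 + p * w)%N ->
  inv_mod p q = p'.
Proof.
move=> h0 h1 h2; rewrite /inv_mod.
case: pickP => [r /andP [hr0 /eqP hr] | hn].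
  have e1 : (r = r * (q * p') %[mod p])%N.
    have -> : (r * (q * p') = (r * w) * p + r)%N by rewrite h2; ring.
    by rewrite modnMDl.
  have e2 : (r * (q * p') = p' %[mod p])%N.
    by rewrite mulnA (mulnC r) -modnMml hr modnMml mul1n.
  have := etrans e1 e2; rewrite !modn_small //; lia.
have := hn (Ordinal h1); rewrite h0 /= h2 addnC mulnC modnMDl eqxx //.
Qed.

Lemma prodm_rev s : prodm (rev s) =
  Mat (m11 (prodm s)) (- m21 (prodm s)) (- m12 (prodm s)) (m22 (prodm s)).
Proof.
elim: s => [|x s IH]; first by rewrite /= /mI; congr Mat.
rewrite rev_cons prodm_rcons IH [prodm (x :: s)]/=.
case: (prodm s) => ????; rewrite /mmul /=; congr Mat; ring.
Qed.

Lemma prodm_pos s : all (fun x => 2 <= x)%N s ->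
  [/\ 0 < m11 (prodm s) + m12 (prodm s), 0 < m21 (prodm s) + m22 (prodm s),
      0 < m11 (prodm s) - m21 (prodm s) & 0 < m11 (prodm s)].
Proof.
case: s => [|x s] hs; first by rewrite /=.
have [h1 [h2 [h3 [h4 [h5 [h6 h7]]]]]] := @prodm_inv (x :: s) hs isT.
split; lia.
Qed.

Lemma prodm_m12 s : all (fun x => 2 <= x)%N s -> s != [::] -> m12 (prodm s) < 0.
Proof.
move=> hs hn; have [h1 [h2 [h3 [h4 [h5 [h6 h7]]]]]] := @prodm_inv s hs hn; lia.
Qed.

Definition G (X Y Z : mat) (m : nat) (k : int) :=
  mmul X (mmul (Mat (k + 1) (- k) k (1 - k)) (mmul Y (mmul (Mat (m%:Z + k) (-1) 1 0) Z))).

Lemma G_m11 X Y Z m k : 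
  m11 (G X Y Z m k) = ((m11 X + m12 X) * (m11 Y - m21 Y) * m11 Z) * k ^+ 2 + (m11 (G X Y Z m 1) - m11 (G X Y Z m 0) - ((m11 X + m12 X) * (m11 Y - m21 Y) * m11 Z)) * k + m11 (G X Y Z m 0).
Proof.
by case: X => ????; case: Y => ????; case: Z => ????; rewrite /G /mmul /=; ring.
Qed.

Lemma G_m21 X Y Z m k : 
  m21 (G X Y Z m k) = ((m21 X + m22 X) * (m11 Y - m21 Y) * m11 Z) * k ^+ 2 + (m21 (G X Y Z m 1) - m21 (G X Y Z m 0) - ((m21 X + m22 X) * (m11 Y - m21 Y) * m11 Z)) * k + m21 (G X Y Z m 0).
Proof.
by case: X => ????; case: Y => ????; case: Z => ????; rewrite /G /mmul /=; ring.
Qed.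

Lemma G_m12 X Y Z m k : 
  m12 (G X Y Z m k) = ((m11 X + m12 X) * (m11 Y - m21 Y) * m12 Z) * k ^+ 2 + (m12 (G X Y Z m 1) - m12 (G X Y Z m 0) - ((m11 X + m12 X) * (m11 Y - m21 Y) * m12 Z)) * k + m12 (G X Y Z m 0).
Proof.
by case: X => ????; case: Y => ????; case: Z => ????; rewrite /G /mmul /=; ring.
Qed.


Lemma cast_poly (D E F : int) (k : nat) :
  ((D * k%:Z ^+ 2 + E * k%:Z + F)%:~R : rat) = D%:~R * k%:R ^+ 2 + E%:~R * k%:R + F%:~R.
Proof. by rewrite !intrD !intrM !expr2 ?intrM -pmulrn. Qed.

Lemma qcancel (a b c : rat) : c != 0 -> (a * c) / (b * c) = a / b.
Proof. by move=> hc; rewrite invfM mulrACA divff // mulr1. Qed.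

Lemma qcancell (a b c : rat) : c != 0 -> (c * a) / (c * b) = a / b.
Proof. by move=> hc; rewrite ![c * _]mulrC qcancel. Qed.

Theorem lemma3p4 (a c b : seq nat) (m : nat)
  (ha : all (fun x => 2 <= x)%N a) (hc : all (fun x => 2 <= x)%N c)
  (hb : all (fun x => 2 <= x)%N b) (hm : (2 <= m)%N)
  (hal : (0 < size a)%N -> (2 < last 0%N a)%N) :
  exists d1 e1 f1 d2 e2 f2 d3 e3 f3 : rat,
    d1 != 0 /\
    (forall k : nat,
      (pval a c b m k)%:~R = d1 * (k%:R) ^+ 2 + e1 * k%:R + f1 /\
      (qval a c b m k)%:~R = d2 * (k%:R) ^+ 2 + e2 * k%:R + f2 /\
      (qinvval a c b m k)%:R = d3 * (k%:R) ^+ 2 + e3 * k%:R + f3) /\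
    d1 / d2 = (match a with
               | [::] => 1
               | x :: s => hj (map natQ (rcons (belast x s) (last x s).-1))
               end) /\
    (match b with
     | [::] => d3 = 0
     | _ :: _ => d1 / d3 = hj (map natQ (rev b))
     end).
Proof.
have HP k : prodm (hjseq a c b m k) = G (prodm a) (prodm c) (prodm b) m k%:Z.
  rewrite /hjseq !prodm_cat prodm_nseq /G /= /Mx PoszD //.
have Hall k : all (fun x => 2 <= x)%N (hjseq a c b m k).
  rewrite /hjseq !all_cat ha hc /= hb all_nseq /= andbT; lia.
have Hne k : hjseq a c b m k != [::].
  by rewrite /hjseq -size_eq0 !size_cat /=; lia.
have Hpq k := numq_prodm _ (Hall k) (Hne k).
have Hqi k : ((qinvval a c b m k)%:R : rat) = (- m12 (prodm (hjseq a c b m k)))%:~R.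
  have [h1 [h2 [h3 [h4 [h5 [h6 h7]]]]]] := @prodm_inv _ (Hall k) (Hne k).
  move: h1 h2 h3 h4 h5 h6 h7.
  rewrite /qinvval /pval /qval (proj1 (Hpq k)) (proj2 (Hpq k)).
  move: (prodm _) => P h1 h2 h3 h4 h5 h6 h7.
  rewrite (@inv_mod_eq _ _ `|- m12 P|%N `|- m22 P|%N); try lia.
  by rewrite pmulrn gez0_abs //; lia.
have [pX1 pX2 pX3 pX4] := prodm_pos _ ha.
have [pY1 pY2 pY pY4] := prodm_pos _ hc.
have [pZ1 pZ2 pZ3 pZ] := prodm_pos _ hb.
pose D11 := (m11 (prodm a) + m12 (prodm a)) * (m11 (prodm c) - m21 (prodm c)) * m11 (prodm b).
pose D21 := (m21 (prodm a) + m22 (prodm a)) * (m11 (prodm c) - m21 (prodm c)) * m11 (prodm b).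
pose D12 := (m11 (prodm a) + m12 (prodm a)) * (m11 (prodm c) - m21 (prodm c)) * m12 (prodm b).
pose g := G (prodm a) (prodm c) (prodm b) m.
exists D11%:~R, (m11 (g 1) - m11 (g 0) - D11)%:~R, (m11 (g 0))%:~R.
exists D21%:~R, (m21 (g 1) - m21 (g 0) - D21)%:~R, (m21 (g 0))%:~R.
exists (- D12)%:~R, (- (m12 (g 1) - m12 (g 0) - D12))%:~R, (- m12 (g 0))%:~R.
split; first by rewrite intr_eq0 /D11 !mulf_eq0 !negb_or; lia.
split.
  move=> k; rewrite Hqi /pval /qval (proj1 (Hpq k)) (proj2 (Hpq k)) HP.
  split; first by rewrite G_m11 cast_poly.
  split; first by rewrite G_m21 cast_poly.
  rewrite -cast_poly; congr intmul; rewrite /g G_m12 /D12; ring.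
rewrite /D11 /D21 /D12; clear g D11 D21 D12 HP Hall Hne Hpq Hqi.
have nY : ((m11 (prodm c) - m21 (prodm c))%:~R : rat) != 0 by rewrite intr_eq0; lia.
have nZ : ((m11 (prodm b))%:~R : rat) != 0 by rewrite intr_eq0; lia.
split.
  case: a ha hal pX1 pX2 pX3 pX4 => [|x s] ha hal pX1 pX2 pX3 pX4.
    rewrite /= addr0 add0r !intrM !qcancel //.
  have hl : (2 < last x s)%N by apply: hal.
  have eX : prodm (x :: s) = mmul (prodm (belast x s)) (Mx (last x s)).
    by rewrite {1}lastI prodm_rcons.
  have hb' : all (fun x => 2 <= x)%N (belast x s) by move: ha; rewrite lastI all_rcons => /andP [].
  have hall' : all (fun x => 2 <= x)%N (rcons (belast x s) (last x s).-1).
    rewrite all_rcons hb' andbT; lia.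
  have hne' : rcons (belast x s) (last x s).-1 != [::] by rewrite -size_eq0 size_rcons.
  have [h1 [h2 _]] := @prodm_inv _ hall' hne'.
  rewrite hj_prodm // !prodm_rcons in h1 h2 *.
  rewrite eX.
  have El : Posz (last x s).-1 = Posz (last x s) - 1 by lia.
  move: (prodm (belast x s)) h1 h2 => W h1 h2.
  move: h1 h2; rewrite /mmul /Mx /= El => h1 h2.
  have -> : m11 W * Posz (last x s) + m12 W * 1 + (m11 W * -1 + m12 W * 0) =
            m11 W * (Posz (last x s) - 1) + m12 W * 1 by ring.
  have -> : m21 W * Posz (last x s) + m22 W * 1 + (m21 W * -1 + m22 W * 0) =
            m21 W * (Posz (last x s) - 1) + m22 W * 1 by ring.
  by rewrite !intrM !qcancel.
case: b hb pZ1 pZ2 pZ3 pZ nZ => [|y b'] hb pZ1 pZ2 pZ3 pZ nZ.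
  by rewrite /= mulr0 oppr0.
have hr : all (fun x => 2 <= x)%N (rev (y :: b')) by rewrite all_rev.
have hrn : rev (y :: b') != [::] by rewrite -size_eq0 size_rev.
rewrite hj_prodm //.
have E1 : m11 (prodm (rev (y :: b'))) = m11 (prodm (y :: b')) by rewrite prodm_rev.
have E2 : m21 (prodm (rev (y :: b'))) = - m12 (prodm (y :: b')) by rewrite prodm_rev.
rewrite E1 E2 -mulrN !intrM qcancell //.
rewrite mulf_neq0 // intr_eq0; lia.
Qed.
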